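(* Let $\Omega,\epsilon\in\mathbb{R}$ and $T\ge 0$. On a qubit $\mathbb{C}^2$ with basis $\{|0\rangle,|1\rangle\}$, let $\Phi_T^\epsilon$ be the quantum channel mapping $\rho(0)\mapsto\rho(T)$, where $\rho(t)$ solves $$\dot\rho=-i\frac{\Omega+\epsilon}{2}[\sigma_z,\rho]+\Big(\sigma_-\rho\sigma_+-\tfrac12\{\sigma_+\sigma_-,\rho\}\Big)+\Big(\sigma_+\rho\sigma_--\tfrac12\{\sigma_-\sigma_+,\rho\}\Big),$$ with $\sigma_+=|1\rangle\langle 0|$, $\sigma_-=\sigma_+^\dagger$, $\sigma_z$ the Pauli $z$ matrix. Then for every qubit density operator $\rho$, $$G_{\mathrm{ch}}(\Phi_T^0,\Phi_T^\epsilon;\rho)=1-2e^{-2T}\big(1-\cos(\epsilon T)\big)\rho_{00}\rho_{11},$$ where $\rho_{kk}=\langle k|\rho|k\rangle$.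
   Context: Superfidelity: $G(\rho_1,\rho_2)=\operatorname{Tr}(\rho_1\rho_2)+\sqrt{1-\operatorname{Tr}\rho_1^2}\sqrt{1-\operatorname{Tr}\rho_2^2}$. Channel superfidelity of channels $\Phi,\Psi$ on $\mathcal{L}(\mathcal{X})$ at $\sigma\in\mathcal{D}(\mathcal{X})$: $G_{\mathrm{ch}}(\Phi,\Psi;\sigma)=\inf G\big((\Phi\otimes\mathbb{1}_{\mathcal{L}(\mathcal{Z})})(\xi),(\Psi\otimes\mathbb{1}_{\mathcal{L}(\mathcal{Z})})(\xi)\big)$ over all finite-dimensional $\mathcal{Z}$ and all pure states $\xi$ on $\mathcal{X}\otimes\mathcal{Z}$ with $\operatorname{Tr}_{\mathcal{Z}}\xi=\sigma$. $\{A,B\}=AB+BA$. *)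

(* Defs.v *)
(* classical reals, complex numbers as pairs of reals,
   finite matrices as functions nat -> nat -> C (only indices < n matter). *)
From Stdlib Require Import Reals.
Open Scope R_scope.

Record C := mkC { Re : R ; Im : R }.
Definition C0 : C := mkC 0 0.
Definition C1 : C := mkC 1 0.
Definition Ci : C := mkC 0 1.
Definition RtoC (r : R) : C := mkC r 0.
Definition Cadd (z w : C) : C := mkC (Re z + Re w) (Im z + Im w).
Definition Copp (z : C) : C := mkC (- Re z) (- Im z).
Definition Cmul (z w : C) : C :=
  mkC (Re z * Re w - Im z * Im w) (Re z * Im w + Im z * Re w).
Definition Cconj (z : C) : C := mkC (Re z) (- Im z).

Definition Mat := nat -> nat -> C.

Fixpoint csum (n : nat) (f : nat -> C) : C :=
  match n with O => C0 | S k => Cadd (csum k f) (f k) end.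

Definition mmul (n : nat) (A B : Mat) : Mat :=
  fun i j => csum n (fun k => Cmul (A i k) (B k j)).
Definition madd (A B : Mat) : Mat := fun i j => Cadd (A i j) (B i j).
Definition mscale (c : C) (A : Mat) : Mat := fun i j => Cmul c (A i j).
Definition msub (A B : Mat) : Mat := madd A (mscale (Copp C1) B).
Definition trace (n : nat) (A : Mat) : C := csum n (fun i => A i i).

Definition hermitian (n : nat) (A : Mat) : Prop :=
  forall i j, (i < n)%nat -> (j < n)%nat -> A i j = Cconj (A j i).
Definition psd (n : nat) (A : Mat) : Prop :=
  forall v : nat -> C,
    0 <= Re (csum n (fun i => Cmul (Cconj (v i))
                               (csum n (fun j => Cmul (A i j) (v j))))).
Definition density (n : nat) (A : Mat) : Prop :=
  hermitian n A /\ psd n A /\ trace n A = C1.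
Definition pure_state (n : nat) (A : Mat) : Prop :=
  density n A /\
  exists v : nat -> C, forall i j, (i < n)%nat -> (j < n)%nat ->
    A i j = Cmul (v i) (Cconj (v j)).

Definition sigma_z : Mat := fun i j =>
  match i, j with O, O => C1 | S O, S O => Copp C1 | _, _ => C0 end.
Definition sigma_p : Mat := fun i j =>
  match i, j with S O, O => C1 | _, _ => C0 end.
Definition sigma_m : Mat := fun i j =>
  match i, j with O, S O => C1 | _, _ => C0 end.

Definition comm2 (A B : Mat) : Mat := msub (mmul 2 A B) (mmul 2 B A).
Definition acomm2 (A B : Mat) : Mat := madd (mmul 2 A B) (mmul 2 B A).

Definition lindblad (w : R) (r : Mat) : Mat :=
  madd (mscale (Cmul (Copp Ci) (RtoC (w / 2))) (comm2 sigma_z r))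
  (madd (msub (mmul 2 (mmul 2 sigma_m r) sigma_p)
              (mscale (RtoC (1/2)) (acomm2 (mmul 2 sigma_p sigma_m) r)))
        (msub (mmul 2 (mmul 2 sigma_p r) sigma_m)
              (mscale (RtoC (1/2)) (acomm2 (mmul 2 sigma_m sigma_p) r)))).

Definition chan_out (w T : R) (X Y : Mat) : Prop :=
  exists rho : R -> Mat,
    (forall i j, (i < 2)%nat -> (j < 2)%nat -> rho 0 i j = X i j) /\
    (forall t i j, (i < 2)%nat -> (j < 2)%nat ->
       derivable_pt_lim (fun s => Re (rho s i j)) t (Re (lindblad w (rho t) i j)) /\
       derivable_pt_lim (fun s => Im (rho s i j)) t (Im (lindblad w (rho t) i j))) /\
    (forall i j, (i < 2)%nat -> (j < 2)%nat -> rho T i j = Y i j).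

(* X (x) Z with dim Z = m; basis |a>|b> has index a*m + b.
   chan_ext_out w T m xi Y : Y = (Phi_T (x) 1_{L(Z)})(xi), computed blockwise:
   (Phi (x) 1)(sum_{b,b'} X_{bb'} (x) |b><b'|) = sum Phi(X_{bb'}) (x) |b><b'|. *)
Definition chan_ext_out (w T : R) (m : nat) (xi Y : Mat) : Prop :=
  exists Yb : nat -> nat -> Mat,
    (forall b b', (b < m)%nat -> (b' < m)%nat ->
       chan_out w T (fun a a' => xi (a * m + b)%nat (a' * m + b')%nat) (Yb b b')) /\
    (forall a a' b b', (a < 2)%nat -> (a' < 2)%nat -> (b < m)%nat -> (b' < m)%nat ->
       Y (a * m + b)%nat (a' * m + b')%nat = Yb b b' a a').

Definition ptrace_Z (m : nat) (xi : Mat) : Mat :=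
  fun a a' => csum m (fun b => xi (a * m + b)%nat (a' * m + b)%nat).

Definition superfid (n : nat) (A B : Mat) : R :=
  Re (trace n (mmul n A B))
  + sqrt (1 - Re (trace n (mmul n A A))) * sqrt (1 - Re (trace n (mmul n B B))).

Definition Gch_values (w0 w1 T : R) (sigma : Mat) (g : R) : Prop :=
  exists (m : nat) (xi Y0 Y1 : Mat),
    pure_state (2 * m) xi /\
    (forall a a', (a < 2)%nat -> (a' < 2)%nat -> ptrace_Z m xi a a' = sigma a a') /\
    chan_ext_out w0 T m xi Y0 /\ chan_ext_out w1 T m xi Y1 /\
    g = superfid (2 * m) Y0 Y1.

Definition is_inf (S : R -> Prop) (x : R) : Prop :=
  (forall g, S g -> x <= g) /\ (forall y, (forall g, S g -> y <= g) -> y <= x).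

Definition channel_superfidelity_is (Omega eps0 eps1 T : R) (sigma : Mat) (x : R) : Prop :=
  is_inf (Gch_values (Omega + eps0) (Omega + eps1) T sigma) x.

(* Main.v *)
Require Import Defs.
From Stdlib Require Import Reals Lra Lia Psatz.
Open Scope R_scope.

Lemma Ceq (z w : Defs.C) : Re z = Re w -> Im z = Im w -> z = w.
Proof. destruct z, w; simpl; intros; subst; reflexivity. Qed.

Ltac Lsimp := unfold lindblad, madd, msub, mscale, mmul, comm2, acomm2, sigma_z, sigma_p, sigma_m; simpl.

Lemma L00 w r : Re (lindblad w r 0%nat 0%nat) = Re (r 1%nat 1%nat) - Re (r 0%nat 0%nat)
  /\ Im (lindblad w r 0%nat 0%nat) = Im (r 1%nat 1%nat) - Im (r 0%nat 0%nat).
Proof. Lsimp. split. lra. lra. Qed.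
Lemma L11 w r : Re (lindblad w r 1%nat 1%nat) = Re (r 0%nat 0%nat) - Re (r 1%nat 1%nat)
  /\ Im (lindblad w r 1%nat 1%nat) = Im (r 0%nat 0%nat) - Im (r 1%nat 1%nat).
Proof. Lsimp; split; field. Qed.
Lemma L01 w r : Re (lindblad w r 0%nat 1%nat) = - Re (r 0%nat 1%nat) + w * Im (r 0%nat 1%nat)
  /\ Im (lindblad w r 0%nat 1%nat) = - Im (r 0%nat 1%nat) - w * Re (r 0%nat 1%nat).
Proof. Lsimp; split; field. Qed.
Lemma L10 w r : Re (lindblad w r 1%nat 0%nat) = - Re (r 1%nat 0%nat) + (-w) * Im (r 1%nat 0%nat)
  /\ Im (lindblad w r 1%nat 0%nat) = - Im (r 1%nat 0%nat) - (-w) * Re (r 1%nat 0%nat).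
Proof. Lsimp; split; field. Qed.

Lemma dlim_eq f x l l' : l = l' -> derivable_pt_lim f x l -> derivable_pt_lim f x l'.
Proof. intros ->; auto. Qed.

Lemma const0 f T : (forall t, derivable_pt_lim f t 0) -> f T = f 0.
Proof.
  intros H.
  set (pr := fun x => exist (fun l => derivable_pt_lim f x l) 0 (H x) : derivable_pt f x).
  assert (Hc := null_derivative_1 f pr (fun x => eq_refl)).
  apply Hc.
Qed.

Lemma D_explin c t : derivable_pt_lim (fun s => exp (c * s)) t (c * exp (c * t)).
Proof.
  assert (H1 : derivable_pt_lim (fun s => c * s) t c).
  { apply (dlim_eq _ _ (c * 1)); [ring|].
    apply (derivable_pt_lim_scal id c t 1), derivable_pt_lim_id. }
  apply (dlim_eq _ _ (exp (c*t) * c)); [ring|].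
  apply (derivable_pt_lim_comp (fun s => c * s) exp t c (exp (c*t)) H1 (derivable_pt_lim_exp _)).
Qed.

Lemma D_coslin c t : derivable_pt_lim (fun s => cos (c * s)) t (- c * sin (c * t)).
Proof.
  assert (H1 : derivable_pt_lim (fun s => c * s) t c).
  { apply (dlim_eq _ _ (c * 1)); [ring|].
    apply (derivable_pt_lim_scal id c t 1), derivable_pt_lim_id. }
  apply (dlim_eq _ _ (- sin (c*t) * c)); [ring|].
  apply (derivable_pt_lim_comp (fun s => c * s) cos t c _ H1 (derivable_pt_lim_cos _)).
Qed.

Lemma D_sinlin c t : derivable_pt_lim (fun s => sin (c * s)) t (c * cos (c * t)).
Proof.
  assert (H1 : derivable_pt_lim (fun s => c * s) t c).
  { apply (dlim_eq _ _ (c * 1)); [ring|].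
    apply (derivable_pt_lim_scal id c t 1), derivable_pt_lim_id. }
  apply (dlim_eq _ _ (cos (c*t) * c)); [ring|].
  apply (derivable_pt_lim_comp (fun s => c * s) sin t c _ H1 (derivable_pt_lim_sin _)).
Qed.

Lemma D_mult f g t df dg : derivable_pt_lim f t df -> derivable_pt_lim g t dg ->
  derivable_pt_lim (fun s => f s * g s) t (df * g t + f t * dg).
Proof. intros. apply (derivable_pt_lim_mult f g t df dg); auto. Qed.

Lemma D_plus f g t df dg : derivable_pt_lim f t df -> derivable_pt_lim g t dg ->
  derivable_pt_lim (fun s => f s + g s) t (df + dg).
Proof. intros. apply (derivable_pt_lim_plus f g t df dg); auto. Qed.

Lemma D_minus f g t df dg : derivable_pt_lim f t df -> derivable_pt_lim g t dg ->
  derivable_pt_lim (fun s => f s - g s) t (df - dg).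
Proof. intros. apply (derivable_pt_lim_minus f g t df dg); auto. Qed.

Lemma D_const a t : derivable_pt_lim (fun _ => a) t 0.
Proof. apply (derivable_pt_lim_const a t). Qed.

Lemma decay f k T : (forall t, derivable_pt_lim f t (k * f t)) -> f T = f 0 * exp (k * T).
Proof.
  intros H.
  assert (E := const0 (fun s => f s * exp (- k * s)) T).
  simpl in E. rewrite Rmult_0_r, exp_0, Rmult_1_r in E.
  assert (E' : f T * exp (- k * T) = f 0).
  { apply E. intro t. eapply dlim_eq; [| apply D_mult; [apply H | apply D_explin]]. cbv beta; ring. }
  rewrite <- E', Rmult_assoc, <- exp_plus.
  replace (- k * T + k * T) with 0 by ring. rewrite exp_0; ring.
Qed.

Lemma pair_sol x y w T :
  (forall t, derivable_pt_lim x t (- x t + w * y t)) ->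
  (forall t, derivable_pt_lim y t (- y t - w * x t)) ->
  x T = exp (-1 * T) * (x 0 * cos (w * T) + y 0 * sin (w * T)) /\
  y T = exp (-1 * T) * (y 0 * cos (w * T) + - x 0 * sin (w * T)).
Proof.
  intros Hx Hy.
  assert (E1 := const0 (fun s => exp (1 * s) * (x s * cos (w * s) - y s * sin (w * s))) T).
  assert (E2 := const0 (fun s => exp (1 * s) * (x s * sin (w * s) + y s * cos (w * s))) T).
  cbv beta in E1, E2.
  replace (1 * 0) with 0 in E1, E2 by ring.
  replace (w * 0) with 0 in E1, E2 by ring.
  rewrite exp_0, cos_0, sin_0 in E1, E2.
  assert (F1 : exp (1 * T) * (x T * cos (w * T) - y T * sin (w * T)) = x 0).
  { rewrite E1; [ring|]. intro t.
    eapply dlim_eq; [| apply D_mult; [apply D_explin | apply D_minus; apply D_mult;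
       [apply Hx | apply D_coslin | apply Hy | apply D_sinlin]]].
    cbv beta; ring. }
  assert (F2 : exp (1 * T) * (x T * sin (w * T) + y T * cos (w * T)) = y 0).
  { rewrite E2; [ring|]. intro t.
    eapply dlim_eq; [| apply D_mult; [apply D_explin | apply D_plus; apply D_mult;
       [apply Hx | apply D_sinlin | apply Hy | apply D_coslin]]].
    cbv beta; ring. }
  rewrite <- F1, <- F2.
  assert (Ee : exp (-1 * T) * exp (1 * T) = 1).
  { rewrite <- exp_plus. replace (-1 * T + 1 * T) with 0 by ring. apply exp_0. }
  assert (Hcs := sin2_cos2 (w * T)). unfold Rsqr in Hcs.
  split.
  - transitivity (x T * (exp (-1 * T) * exp (1 * T)) * (sin (w * T) * sin (w * T) + cos (w * T) * cos (w * T))).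
    + rewrite Ee, Hcs; ring.
    + ring.
  - transitivity (y T * (exp (-1 * T) * exp (1 * T)) * (sin (w * T) * sin (w * T) + cos (w * T) * cos (w * T))).
    + rewrite Ee, Hcs; ring.
    + ring.
Qed.

Definition traj (w : R) (X : Mat) (t : R) : Mat := fun i j =>
  match i, j with
  | O, O => mkC ((Re (X 0%nat 0%nat) + Re (X 1%nat 1%nat)) / 2
                 + (Re (X 0%nat 0%nat) - Re (X 1%nat 1%nat)) / 2 * exp (-2 * t))
                ((Im (X 0%nat 0%nat) + Im (X 1%nat 1%nat)) / 2
                 + (Im (X 0%nat 0%nat) - Im (X 1%nat 1%nat)) / 2 * exp (-2 * t))
  | S O, S O => mkC ((Re (X 0%nat 0%nat) + Re (X 1%nat 1%nat)) / 2
                 + - ((Re (X 0%nat 0%nat) - Re (X 1%nat 1%nat)) / 2) * exp (-2 * t))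
                ((Im (X 0%nat 0%nat) + Im (X 1%nat 1%nat)) / 2
                 + - ((Im (X 0%nat 0%nat) - Im (X 1%nat 1%nat)) / 2) * exp (-2 * t))
  | O, S O => mkC (exp (-1 * t) * (Re (X 0%nat 1%nat) * cos (w * t) + Im (X 0%nat 1%nat) * sin (w * t)))
                  (exp (-1 * t) * (Im (X 0%nat 1%nat) * cos (w * t) + - Re (X 0%nat 1%nat) * sin (w * t)))
  | S O, O => mkC (exp (-1 * t) * (Re (X 1%nat 0%nat) * cos (-w * t) + Im (X 1%nat 0%nat) * sin (-w * t)))
                  (exp (-1 * t) * (Im (X 1%nat 0%nat) * cos (-w * t) + - Re (X 1%nat 0%nat) * sin (-w * t)))
  | _, _ => C0
  end.

Lemma diag_sol fa fd T :
  (forall t, derivable_pt_lim fa t (fd t - fa t)) ->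
  (forall t, derivable_pt_lim fd t (fa t - fd t)) ->
  fa T = (fa 0 + fd 0) / 2 + (fa 0 - fd 0) / 2 * exp (-2 * T) /\
  fd T = (fa 0 + fd 0) / 2 + - ((fa 0 - fd 0) / 2) * exp (-2 * T).
Proof.
  intros Ha Hd.
  assert (S := const0 (fun s => fa s + fd s) T).
  assert (D := decay (fun s => fa s - fd s) (-2) T).
  cbv beta in S, D.
  assert (S' : fa T + fd T = fa 0 + fd 0).
  { apply S. intro t. eapply dlim_eq; [|apply D_plus; [apply Ha|apply Hd]]. ring. }
  assert (D' : fa T - fd T = (fa 0 - fd 0) * exp (-2 * T)).
  { apply D. intro t. eapply dlim_eq; [|apply D_minus; [apply Ha|apply Hd]]. ring. }
  split; lra.
Qed.

Lemma chan_unique w T X Y : chan_out w T X Y ->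
  forall i j, (i < 2)%nat -> (j < 2)%nat -> Y i j = traj w X T i j.
Proof.
  intros [rho [H0 [HD HT]]] i j Hi Hj.
  rewrite <- HT by auto.
  assert (D : forall i j, (i < 2)%nat -> (j < 2)%nat -> forall t,
     derivable_pt_lim (fun s => Re (rho s i j)) t (Re (lindblad w (rho t) i j)) /\
     derivable_pt_lim (fun s => Im (rho s i j)) t (Im (lindblad w (rho t) i j))) by auto.
  assert (D00 := D 0%nat 0%nat ltac:(lia) ltac:(lia)).
  assert (D11 := D 1%nat 1%nat ltac:(lia) ltac:(lia)).
  assert (D01 := D 0%nat 1%nat ltac:(lia) ltac:(lia)).
  assert (D10 := D 1%nat 0%nat ltac:(lia) ltac:(lia)).
  destruct i as [|[|i]]; [| |lia]; destruct j as [|[|j]]; try lia; apply Ceq; simpl;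
  rewrite <- ?(H0 0%nat 0%nat), <- ?(H0 1%nat 1%nat), <- ?(H0 0%nat 1%nat), <- ?(H0 1%nat 0%nat) by lia.
  - refine (proj1 (diag_sol (fun s => Re (rho s 0%nat 0%nat)) (fun s => Re (rho s 1%nat 1%nat)) T _ _));
      intro t; [rewrite <- (proj1 (L00 w (rho t))); apply (D00 t) | rewrite <- (proj1 (L11 w (rho t))); apply (D11 t)].
  - refine (proj1 (diag_sol (fun s => Im (rho s 0%nat 0%nat)) (fun s => Im (rho s 1%nat 1%nat)) T _ _));
      intro t; [rewrite <- (proj2 (L00 w (rho t))); apply (D00 t) | rewrite <- (proj2 (L11 w (rho t))); apply (D11 t)].
  - refine (proj1 (pair_sol (fun s => Re (rho s 0%nat 1%nat)) (fun s => Im (rho s 0%nat 1%nat)) w T _ _));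
      intro t; [rewrite <- (proj1 (L01 w (rho t))); apply (D01 t) | rewrite <- (proj2 (L01 w (rho t))); apply (D01 t)].
  - refine (proj2 (pair_sol (fun s => Re (rho s 0%nat 1%nat)) (fun s => Im (rho s 0%nat 1%nat)) w T _ _));
      intro t; [rewrite <- (proj1 (L01 w (rho t))); apply (D01 t) | rewrite <- (proj2 (L01 w (rho t))); apply (D01 t)].
  - refine (proj1 (pair_sol (fun s => Re (rho s 1%nat 0%nat)) (fun s => Im (rho s 1%nat 0%nat)) (-w) T _ _));
      intro t; [rewrite <- (proj1 (L10 w (rho t))); apply (D10 t) | rewrite <- (proj2 (L10 w (rho t))); apply (D10 t)].
  - refine (proj2 (pair_sol (fun s => Re (rho s 1%nat 0%nat)) (fun s => Im (rho s 1%nat 0%nat)) (-w) T _ _));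
      intro t; [rewrite <- (proj1 (L10 w (rho t))); apply (D10 t) | rewrite <- (proj2 (L10 w (rho t))); apply (D10 t)].
  - refine (proj2 (diag_sol (fun s => Re (rho s 0%nat 0%nat)) (fun s => Re (rho s 1%nat 1%nat)) T _ _));
      intro t; [rewrite <- (proj1 (L00 w (rho t))); apply (D00 t) | rewrite <- (proj1 (L11 w (rho t))); apply (D11 t)].
  - refine (proj2 (diag_sol (fun s => Im (rho s 0%nat 0%nat)) (fun s => Im (rho s 1%nat 1%nat)) T _ _));
      intro t; [rewrite <- (proj2 (L00 w (rho t))); apply (D00 t) | rewrite <- (proj2 (L11 w (rho t))); apply (D11 t)].
Qed.

Ltac dsolve := repeat first [ apply D_plus | apply D_minus | apply D_mult | apply D_const
   | apply D_explin | apply D_coslin | apply D_sinlin ].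

Lemma chan_exists w T X : chan_out w T X (traj w X T).
Proof.
  exists (traj w X). split; [|split].
  - intros i j Hi Hj.
    destruct i as [|[|i]]; [| |lia]; destruct j as [|[|j]]; try lia; apply Ceq; simpl;
    rewrite ?Rmult_0_r, ?exp_0, ?cos_0, ?sin_0; field.
  - intros t i j Hi Hj.
    destruct i as [|[|i]]; [| |lia]; destruct j as [|[|j]]; try lia.
    + rewrite (proj1 (L00 w _)), (proj2 (L00 w _)); simpl.
      split; (eapply dlim_eq; [|dsolve]); cbv beta; field.
    + rewrite (proj1 (L01 w _)), (proj2 (L01 w _)); simpl.
      split; (eapply dlim_eq; [|dsolve]); cbv beta; ring.
    + rewrite (proj1 (L10 w _)), (proj2 (L10 w _)); simpl.
      split; (eapply dlim_eq; [|dsolve]); cbv beta; ring.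
    + rewrite (proj1 (L11 w _)), (proj2 (L11 w _)); simpl.
      split; (eapply dlim_eq; [|dsolve]); cbv beta; field.
  - intros; reflexivity.
Qed.

Fixpoint rsum (n : nat) (f : nat -> R) : R :=
  match n with O => 0 | S k => rsum k f + f k end.

Lemma csum_ext n f g : (forall k, (k < n)%nat -> f k = g k) -> csum n f = csum n g.
Proof. induction n; simpl; intros H; auto. rewrite IHn, H; auto. Qed.

Lemma rsum_ext n f g : (forall k, (k < n)%nat -> f k = g k) -> rsum n f = rsum n g.
Proof. induction n; simpl; intros H; auto. rewrite IHn, H; auto. Qed.

Lemma Re_csum n f : Re (csum n f) = rsum n (fun k => Re (f k)).
Proof. induction n; simpl; auto. rewrite IHn; auto. Qed.
Lemma Im_csum n f : Im (csum n f) = rsum n (fun k => Im (f k)).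
Proof. induction n; simpl; auto. rewrite IHn; auto. Qed.

Lemma csum_plus n k f : csum (n + k) f = Cadd (csum n f) (csum k (fun j => f (n + j)%nat)).
Proof.
  induction k; simpl.
  - rewrite Nat.add_0_r. apply Ceq; simpl; ring.
  - rewrite Nat.add_succ_r. simpl. rewrite IHk. apply Ceq; simpl; ring.
Qed.

Lemma Re_Cadd a b : Re (Cadd a b) = Re a + Re b.
Proof. reflexivity. Qed.

Lemma rsum_plus n f g : rsum n (fun k => f k + g k) = rsum n f + rsum n g.
Proof. induction n; simpl; [ring|]. rewrite IHn; ring. Qed.

Lemma csum_2m (m : nat) f : csum (2 * m)%nat f = Cadd (csum m f) (csum m (fun b => f (m + b)%nat)).
Proof. replace (2 * m)%nat with (m + m)%nat by lia. apply csum_plus. Qed.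

Lemma ReTr (m : nat) A B : Re (trace (2 * m)%nat (mmul (2 * m)%nat A B)) =
  rsum m (fun b => rsum m (fun b' =>
      Re (Cmul (A b b') (B b' b)) + Re (Cmul (A b (m + b')%nat) (B (m + b')%nat b))
    + Re (Cmul (A (m + b)%nat b') (B b' (m + b)%nat))
    + Re (Cmul (A (m + b)%nat (m + b')%nat) (B (m + b')%nat (m + b)%nat)))).
Proof.
  unfold trace, mmul. rewrite csum_2m, Re_Cadd, !Re_csum.
  rewrite <- rsum_plus. apply rsum_ext. intros b Hb.
  rewrite !csum_2m, !Re_Cadd, !Re_csum.
  rewrite <- !rsum_plus. apply rsum_ext. intros; ring.
Qed.

Lemma inner_eval m (f1 f2 f3 f4 : nat -> R) c1 c2 c3 x1 x2 x3 x4 :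
  rsum m (fun b' => c1 * (x1 * f1 b' + x2 * f2 b') + c2 * (x3 * f3 b' + x4 * f4 b')
     + c3 * (x1 * f2 b' + x2 * f1 b')) =
  c1 * (x1 * rsum m f1 + x2 * rsum m f2) + c2 * (x3 * rsum m f3 + x4 * rsum m f4)
     + c3 * (x1 * rsum m f2 + x2 * rsum m f1).
Proof. induction m; simpl; [ring|]. rewrite IHm; ring. Qed.

Lemma outer_eval m (f1 f2 f3 f4 : nat -> R) c1 c2 c3 y1 y2 y3 y4 :
  rsum m (fun b => c1 * (f1 b * y1 + f2 b * y2) + c2 * (f3 b * y3 + f4 b * y4)
     + c3 * (f1 b * y2 + f2 b * y1)) =
  c1 * (rsum m f1 * y1 + rsum m f2 * y2) + c2 * (rsum m f3 * y3 + rsum m f4 * y4)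
     + c3 * (rsum m f1 * y2 + rsum m f2 * y1).
Proof. induction m; simpl; [ring|]. rewrite IHm; ring. Qed.

Lemma dsum_eval m (f1 f2 f3 f4 : nat -> R) c1 c2 c3 :
  rsum m (fun b => rsum m (fun b' => c1 * (f1 b * f1 b' + f2 b * f2 b') + c2 * (f3 b * f3 b' + f4 b * f4 b')
     + c3 * (f1 b * f2 b' + f2 b * f1 b'))) =
  c1 * (rsum m f1 * rsum m f1 + rsum m f2 * rsum m f2) + c2 * (rsum m f3 * rsum m f3 + rsum m f4 * rsum m f4)
     + c3 * (2 * (rsum m f1 * rsum m f2)).
Proof.
  rewrite (rsum_ext m _ (fun b => c1 * (f1 b * rsum m f1 + f2 b * rsum m f2) + c2 * (f3 b * rsum m f3 + f4 b * rsum m f4)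
     + c3 * (f1 b * rsum m f2 + f2 b * rsum m f1))).
  - rewrite outer_eval. ring.
  - intros. apply inner_eval.
Qed.

Lemma density_facts rho : density 2 rho ->
  Im (rho 0%nat 0%nat) = 0 /\ Im (rho 1%nat 1%nat) = 0 /\
  Re (rho 1%nat 0%nat) = Re (rho 0%nat 1%nat) /\ Im (rho 1%nat 0%nat) = - Im (rho 0%nat 1%nat) /\
  Re (rho 0%nat 0%nat) + Re (rho 1%nat 1%nat) = 1 /\
  0 <= Re (rho 0%nat 0%nat) /\ 0 <= Re (rho 1%nat 1%nat) /\
  Re (rho 0%nat 1%nat) ^ 2 + Im (rho 0%nat 1%nat) ^ 2 <= Re (rho 0%nat 0%nat) * Re (rho 1%nat 1%nat).
Proof.
  intros [Hh [Hp Ht]].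
  assert (H00 := Hh 0%nat 0%nat ltac:(lia) ltac:(lia)).
  assert (H11 := Hh 1%nat 1%nat ltac:(lia) ltac:(lia)).
  assert (H10 := Hh 1%nat 0%nat ltac:(lia) ltac:(lia)).
  assert (I00 : Im (rho 0%nat 0%nat) = 0).
  { apply (f_equal Im) in H00. simpl in H00. lra. }
  assert (I11 : Im (rho 1%nat 1%nat) = 0).
  { apply (f_equal Im) in H11. simpl in H11. lra. }
  assert (R10 : Re (rho 1%nat 0%nat) = Re (rho 0%nat 1%nat)).
  { apply (f_equal Re) in H10. simpl in H10. lra. }
  assert (J10 : Im (rho 1%nat 0%nat) = - Im (rho 0%nat 1%nat)).
  { apply (f_equal Im) in H10. simpl in H10. lra. }
  assert (Tr : Re (rho 0%nat 0%nat) + Re (rho 1%nat 1%nat) = 1).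
  { apply (f_equal Re) in Ht. unfold trace in Ht. simpl in Ht. lra. }
  set (a := Re (rho 0%nat 0%nat)) in *. set (d := Re (rho 1%nat 1%nat)) in *.
  set (x := Re (rho 0%nat 1%nat)) in *. set (y := Im (rho 0%nat 1%nat)) in *.
  assert (P := fun al be => Hp (fun i => match i with O => al | _ => be end)).
  assert (Pa := P Defs.C1 Defs.C0). assert (Pd := P Defs.C0 Defs.C1).
  assert (P1 := P (RtoC d) (Copp (rho 1%nat 0%nat))).
  assert (P2 := P (Copp (rho 0%nat 1%nat)) (RtoC a)).
  simpl in Pa, Pd, P1, P2.
  fold a d x y in Pa, Pd, P1, P2.
  rewrite I00, I11, R10, J10 in Pa, Pd, P1, P2.
  fold x y in Pa, Pd, P1, P2.
  repeat split; auto; try nra.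
Qed.

Definition Xv (z0 z1 z0' z1' : Defs.C) : Mat := fun c c' =>
  Cmul (match c with O => z0 | _ => z1 end) (Cconj (match c' with O => z0' | _ => z1' end)).

Definition Nn (z : Defs.C) : R := Re z * Re z + Im z * Im z.
Definition Ra (z0 z1 : Defs.C) : R := Re z0 * Re z1 + Im z0 * Im z1.
Definition Ia (z0 z1 : Defs.C) : R := Im z0 * Re z1 - Re z0 * Im z1.

Lemma cos_negm w t : cos (- w * t) = cos (w * t).
Proof. replace (- w * t) with (- (w * t)) by ring. apply cos_neg. Qed.
Lemma sin_negm w t : sin (- w * t) = - sin (w * t).
Proof. replace (- w * t) with (- (w * t)) by ring. apply sin_neg. Qed.

Lemma pointwise w w' T z0 z1 z0' z1' :
  let A := traj w (Xv z0 z1 z0' z1') T in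
  let B := traj w' (Xv z0' z1' z0 z1) T in
  let E := exp (-2 * T) in
  Re (Cmul (A 0%nat 0%nat) (B 0%nat 0%nat)) + Re (Cmul (A 0%nat 1%nat) (B 1%nat 0%nat))
  + Re (Cmul (A 1%nat 0%nat) (B 0%nat 1%nat)) + Re (Cmul (A 1%nat 1%nat) (B 1%nat 1%nat)) =
  (1 + E * E) / 2 * (Nn z0 * Nn z0' + Nn z1 * Nn z1')
  + (1 - E * E) * (Ra z0 z1 * Ra z0' z1' + Ia z0 z1 * Ia z0' z1')
  + exp (-1 * T) * exp (-1 * T) * (cos (w * T) * cos (w' * T) + sin (w * T) * sin (w' * T))
    * (Nn z0 * Nn z1' + Nn z1 * Nn z0').
Proof.
  intros A B E. subst A B E. unfold traj, Xv, Nn, Ra, Ia. simpl.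
  rewrite !cos_negm, !sin_negm.
  destruct z0, z1, z0', z1'; simpl. field.
Qed.

Lemma traj_ext w X X' t : (forall c c', (c < 2)%nat -> (c' < 2)%nat -> X c c' = X' c c') ->
  forall a a', traj w X t a a' = traj w X' t a a'.
Proof.
  intros H a a'. unfold traj.
  rewrite (H 0%nat 0%nat), (H 1%nat 1%nat), (H 0%nat 1%nat), (H 1%nat 0%nat) by lia.
  reflexivity.
Qed.

Lemma Yentry w T m xi (v : nat -> Defs.C) Y :
  (forall i j, (i < 2 * m)%nat -> (j < 2 * m)%nat -> xi i j = Cmul (v i) (Cconj (v j))) ->
  chan_ext_out w T m xi Y ->
  forall a a' b b' i j, (a < 2)%nat -> (a' < 2)%nat -> (b < m)%nat -> (b' < m)%nat ->
  i = (a * m + b)%nat -> j = (a' * m + b')%nat ->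
  Y i j = traj w (Xv (v b) (v (m + b)%nat) (v b') (v (m + b')%nat)) T a a'.
Proof.
  intros Hv [Yb [Hc HYe]] a a' b b' i j Ha Ha' Hb Hb' -> ->.
  rewrite HYe by auto.
  rewrite (chan_unique _ _ _ _ (Hc b b' Hb Hb') a a' Ha Ha').
  apply traj_ext. intros c c' Hc1 Hc2.
  rewrite Hv by nia.
  destruct c as [|[|c]]; [| |lia]; destruct c' as [|[|c']]; try lia;
  unfold Xv; rewrite ?Nat.mul_0_l, ?Nat.mul_1_l, ?Nat.add_0_l; reflexivity.
Qed.

Lemma ReTrY w w' T m xi (v : nat -> Defs.C) Y Y' :
  (forall i j, (i < 2 * m)%nat -> (j < 2 * m)%nat -> xi i j = Cmul (v i) (Cconj (v j))) ->
  chan_ext_out w T m xi Y -> chan_ext_out w' T m xi Y' ->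
  let E := exp (-2 * T) in
  let r0 := rsum m (fun b => Nn (v b)) in
  let r1 := rsum m (fun b => Nn (v (m + b)%nat)) in
  let A := rsum m (fun b => Ra (v b) (v (m + b)%nat)) in
  let B := rsum m (fun b => Ia (v b) (v (m + b)%nat)) in
  Re (trace (2 * m)%nat (mmul (2 * m)%nat Y Y')) =
  (1 + E * E) / 2 * (r0 * r0 + r1 * r1) + (1 - E * E) * (A * A + B * B)
  + exp (-1 * T) * exp (-1 * T) * (cos (w * T) * cos (w' * T) + sin (w * T) * sin (w' * T)) * (2 * (r0 * r1)).
Proof.
  intros Hv HY HY' E r0 r1 A B.
  rewrite ReTr. subst E r0 r1 A B. rewrite <- dsum_eval.
  apply rsum_ext. intros b Hb. apply rsum_ext. intros b' Hb'.
  rewrite (Yentry w T m xi v Y Hv HY 0 0 b b' b b') by lia.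
  rewrite (Yentry w T m xi v Y Hv HY 0 1 b b' b (m + b')) by lia.
  rewrite (Yentry w T m xi v Y Hv HY 1 0 b b' (m + b) b') by lia.
  rewrite (Yentry w T m xi v Y Hv HY 1 1 b b' (m + b) (m + b')) by lia.
  rewrite (Yentry w' T m xi v Y' Hv HY' 0 0 b' b b' b) by lia.
  rewrite (Yentry w' T m xi v Y' Hv HY' 1 0 b' b (m + b') b) by lia.
  rewrite (Yentry w' T m xi v Y' Hv HY' 0 1 b' b b' (m + b)) by lia.
  rewrite (Yentry w' T m xi v Y' Hv HY' 1 1 b' b (m + b') (m + b)) by lia.
  exact (pointwise w w' T (v b) (v (m + b)%nat) (v b') (v (m + b')%nat)).
Qed.

Lemma value_eq Omega eps T rho m xi Y0 Y1 :
  0 <= T -> density 2 rho -> pure_state (2 * m) xi ->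
  (forall a a', (a < 2)%nat -> (a' < 2)%nat -> ptrace_Z m xi a a' = rho a a') ->
  chan_ext_out (Omega + 0) T m xi Y0 -> chan_ext_out (Omega + eps) T m xi Y1 ->
  superfid (2 * m) Y0 Y1 =
  1 - 2 * exp (- (2 * T)) * (1 - cos (eps * T)) * Re (rho 0%nat 0%nat) * Re (rho 1%nat 1%nat).
Proof.
  intros HT Hd [_ [v Hv]] Hpt H0 H1.
  destruct (density_facts rho Hd) as (I00 & I11 & R10 & J10 & Tr & Pa & Pd & Ps).
  assert (E01 := ReTrY _ _ T m xi v Y0 Y1 Hv H0 H1).
  assert (E00 := ReTrY _ _ T m xi v Y0 Y0 Hv H0 H0).
  assert (E11 := ReTrY _ _ T m xi v Y1 Y1 Hv H1 H1).
  cbv zeta in E01, E00, E11.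
  assert (Pt : forall a a', (a < 2)%nat -> (a' < 2)%nat ->
     csum m (fun b => Cmul (v (a * m + b)%nat) (Cconj (v (a' * m + b)%nat))) = rho a a').
  { intros a a' Ha Ha'. rewrite <- Hpt by auto. unfold ptrace_Z. apply csum_ext.
    intros b Hb. rewrite Hv by nia. reflexivity. }
  assert (r0e : rsum m (fun b => Nn (v b)) = Re (rho 0%nat 0%nat)).
  { rewrite <- (Pt 0%nat 0%nat) by lia. rewrite Re_csum. apply rsum_ext. intros.
    unfold Nn. simpl. ring. }
  assert (r1e : rsum m (fun b => Nn (v (m + b)%nat)) = Re (rho 1%nat 1%nat)).
  { rewrite <- (Pt 1%nat 1%nat) by lia. rewrite Re_csum. apply rsum_ext. intros.
    rewrite Nat.mul_1_l. unfold Nn. simpl. ring. }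
  assert (Ae : rsum m (fun b => Ra (v b) (v (m + b)%nat)) = Re (rho 0%nat 1%nat)).
  { rewrite <- (Pt 0%nat 1%nat) by lia. rewrite Re_csum. apply rsum_ext. intros.
    rewrite Nat.mul_1_l. unfold Ra. simpl. ring. }
  assert (Be : rsum m (fun b => Ia (v b) (v (m + b)%nat)) = Im (rho 0%nat 1%nat)).
  { rewrite <- (Pt 0%nat 1%nat) by lia. rewrite Im_csum. apply rsum_ext. intros.
    rewrite Nat.mul_1_l. unfold Ia. simpl. ring. }
  rewrite r0e, r1e, Ae, Be in E01, E00, E11.
  set (r0 := Re (rho 0%nat 0%nat)) in *. set (r1 := Re (rho 1%nat 1%nat)) in *.
  set (x := Re (rho 0%nat 1%nat)) in *. set (y := Im (rho 0%nat 1%nat)) in *.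
  assert (Ee : exp (-1 * T) * exp (-1 * T) = exp (- (2 * T))).
  { rewrite <- exp_plus. f_equal. ring. }
  replace (-2 * T) with (- (2 * T)) in E01, E00, E11 by ring.
  rewrite Ee in E01, E00, E11.
  set (E := exp (- (2 * T))) in *.
  assert (Epos : 0 < E) by apply exp_pos.
  assert (Ele : E <= 1).
  { unfold E. rewrite <- exp_0. destruct (Req_dec T 0) as [->|HT0].
    - replace (- (2 * 0)) with 0 by ring. lra.
    - left. apply exp_increasing. lra. }
  assert (Cs : forall u, cos u * cos u + sin u * sin u = 1).
  { intro u. rewrite <- (sin2_cos2 u). unfold Rsqr. ring. }
  rewrite Cs in E00, E11.
  assert (Cm : cos ((Omega + 0) * T) * cos ((Omega + eps) * T) + sin ((Omega + 0) * T) * sin ((Omega + eps) * T)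
               = cos (eps * T)).
  { rewrite <- cos_minus. replace ((Omega + 0) * T - (Omega + eps) * T) with (- (eps * T)) by ring.
    apply cos_neg. }
  rewrite Cm in E01.
  unfold superfid. rewrite E01, E00, E11.
  set (P := (1 + E * E) / 2 * (r0 * r0 + r1 * r1) + (1 - E * E) * (x * x + y * y) + E * 1 * (2 * (r0 * r1))).
  assert (HP : 0 <= 1 - P).
  { unfold P.
    assert (h1 : 0 <= (1 - E * E) * (r0 * r1 - (x * x + y * y))).
    { apply Rmult_le_pos; nra. }
    assert (h2 : 0 <= (1 - E) * (r0 * r1)).
    { apply Rmult_le_pos; nra. }
    assert (h3 : 0 <= (1 - E * E) * ((r0 - r1) * (r0 - r1))).
    { apply Rmult_le_pos; [nra | apply Rle_0_sqr]. }
    replace 1 with ((r0 + r1) * (r0 + r1)) at 1 by (rewrite Tr; ring).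
    nra. }
  rewrite sqrt_sqrt by exact HP.
  unfold P. ring.
Qed.

Lemma csum_mul_l c n f : csum n (fun j => Cmul c (f j)) = Cmul c (csum n f).
Proof.
  induction n; simpl.
  - apply Ceq; simpl; ring.
  - rewrite IHn. apply Ceq; simpl; ring.
Qed.
Lemma csum_mul_r c n f : csum n (fun j => Cmul (f j) c) = Cmul (csum n f) c.
Proof.
  induction n; simpl.
  - apply Ceq; simpl; ring.
  - rewrite IHn. apply Ceq; simpl; ring.
Qed.

Lemma rsum_m1 n f : rsum n (fun k => -1 * f k) = - rsum n f.
Proof. induction n; simpl; [ring|]. rewrite IHn. ring. Qed.

Lemma psd_rank1 n (v z : nat -> Defs.C) :
  0 <= Re (csum n (fun i => Cmul (Cconj (z i))
       (csum n (fun j => Cmul (Cmul (v i) (Cconj (v j))) (z j))))).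
Proof.
  set (G := csum n (fun j => Cmul (Cconj (v j)) (z j))).
  rewrite (csum_ext n _ (fun i => Cmul (Cmul (Cconj (z i)) (v i)) G)).
  - rewrite csum_mul_r.
    set (W := csum n (fun i => Cmul (Cconj (z i)) (v i))).
    assert (HR : Re G = Re W).
    { unfold G, W. rewrite !Re_csum. apply rsum_ext. intros; simpl; ring. }
    assert (HI : Im G = - Im W).
    { unfold G, W. rewrite !Im_csum.
      transitivity (rsum n (fun k => -1 * Im (Cmul (Cconj (z k)) (v k)))).
      - apply rsum_ext. intros; simpl; ring.
      - apply rsum_m1. }
    simpl. rewrite HR, HI. nra.
  - intros i _. unfold G. rewrite <- !csum_mul_l. apply csum_ext. intros.
    apply Ceq; simpl; ring.
Qed.

Lemma pure_from_v (v : nat -> Defs.C) rho :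
  density 2 rho ->
  (forall a a', (a < 2)%nat -> (a' < 2)%nat ->
     ptrace_Z 2 (fun i j => Cmul (v i) (Cconj (v j))) a a' = rho a a') ->
  pure_state (2 * 2) (fun i j => Cmul (v i) (Cconj (v j))).
Proof.
  intros Hd Hpt.
  destruct (density_facts rho Hd) as (I00 & I11 & R10 & J10 & Tr & Pa & Pd & Ps).
  split; [split; [|split]|].
  - intros i j _ _. apply Ceq; simpl; ring.
  - intro z. apply psd_rank1.
  - assert (H00 := Hpt 0%nat 0%nat ltac:(lia) ltac:(lia)).
    assert (H11 := Hpt 1%nat 1%nat ltac:(lia) ltac:(lia)).
    apply Ceq.
    + transitivity (Re (ptrace_Z 2 (fun i j => Cmul (v i) (Cconj (v j))) 0%nat 0%nat)
          + Re (ptrace_Z 2 (fun i j => Cmul (v i) (Cconj (v j))) 1%nat 1%nat)).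
      * unfold trace, ptrace_Z. simpl. ring.
      * rewrite H00, H11, Tr. reflexivity.
    + transitivity (Im (ptrace_Z 2 (fun i j => Cmul (v i) (Cconj (v j))) 0%nat 0%nat)
          + Im (ptrace_Z 2 (fun i j => Cmul (v i) (Cconj (v j))) 1%nat 1%nat)).
      * unfold trace, ptrace_Z. simpl. ring.
      * rewrite H00, H11, I00, I11. simpl. ring.
  - exists v. intros; reflexivity.
Qed.

Lemma purification rho : density 2 rho -> exists v : nat -> Defs.C,
  forall a a', (a < 2)%nat -> (a' < 2)%nat ->
     ptrace_Z 2 (fun i j => Cmul (v i) (Cconj (v j))) a a' = rho a a'.
Proof.
  intros Hd.
  destruct (density_facts rho Hd) as (I00 & I11 & R10 & J10 & Tr & Pa & Pd & Ps).
  set (a := Re (rho 0%nat 0%nat)) in *. set (d := Re (rho 1%nat 1%nat)) in *.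
  set (x := Re (rho 0%nat 1%nat)) in *. set (y := Im (rho 0%nat 1%nat)) in *.
  destruct (Req_dec a 0) as [Ha0 | Ha0].
  - assert (Hx : x = 0) by nra. assert (Hy : y = 0) by nra.
    exists (fun i => match i with 2%nat => Defs.C1 | _ => Defs.C0 end).
    intros i j Hi Hj.
    destruct i as [|[|i]]; [| |lia]; destruct j as [|[|j]]; try lia; apply Ceq;
      unfold ptrace_Z; simpl; fold a d x y; rewrite ?I00, ?I11, ?R10, ?J10; fold x y; lra.
  - assert (Hapos : 0 < a) by lra.
    set (sa := sqrt a).
    assert (Hsa : sa * sa = a) by (apply sqrt_sqrt; lra).
    assert (Hsap : 0 < sa) by (apply sqrt_lt_R0; lra).
    assert (Hr : 0 <= d - (x ^ 2 + y ^ 2) / a).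
    { replace (d - (x ^ 2 + y ^ 2) / a) with ((a * d - (x ^ 2 + y ^ 2)) * / a) by (field; lra).
      apply Rmult_le_pos; [lra|left; apply Rinv_0_lt_compat; lra]. }
    set (sr := sqrt (d - (x ^ 2 + y ^ 2) / a)).
    assert (Hsr : sr * sr = d - (x ^ 2 + y ^ 2) / a) by (apply sqrt_sqrt; lra).
    exists (fun i => match i with
                     | O => mkC sa 0
                     | 2%nat => mkC (x / sa) (- y / sa)
                     | 3%nat => mkC sr 0
                     | _ => Defs.C0 end).
    intros i j Hi Hj.
    destruct i as [|[|i]]; [| |lia]; destruct j as [|[|j]]; try lia; apply Ceq;
      unfold ptrace_Z; simpl; fold a d x y; rewrite ?I00, ?I11, ?R10, ?J10; fold x y.
    all: try (field; lra).
    all: rewrite ?Hsr, ?Hsa; try (field; split; lra).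
all: rewrite <- Hsa; field; lra.
Qed.

Definition Ybl (w T : R) (xi : Mat) (b b' : nat) : Mat :=
  traj w (fun c c' => xi (c * 2 + b)%nat (c' * 2 + b')%nat) T.
Definition Yfull (w T : R) (xi : Mat) : Mat := fun i j =>
  Ybl w T xi (i mod 2)%nat (j mod 2)%nat (i / 2)%nat (j / 2)%nat.

Lemma Yfull_ok w T xi : chan_ext_out w T 2 xi (Yfull w T xi).
Proof.
  exists (Ybl w T xi). split.
  - intros b b' _ _. apply chan_exists.
  - intros a a' b b' Ha Ha' Hb Hb'.
    destruct a as [|[|]]; try lia; destruct a' as [|[|]]; try lia;
    destruct b as [|[|]]; try lia; destruct b' as [|[|]]; try lia; reflexivity.
Qed.

Theorem mainTheorem7 (Omega eps T : R) (rho : Mat) :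
  0 <= T -> density 2 rho ->
  channel_superfidelity_is Omega 0 eps T rho
    (1 - 2 * exp (- (2 * T)) * (1 - cos (eps * T)) * Re (rho 0%nat 0%nat) * Re (rho 1%nat 1%nat)).
Proof.
  intros HT Hd. split.
  - intros g [m [xi [Y0 [Y1 [Hp [Hpt [H0 [H1 ->]]]]]]]].
    rewrite (value_eq Omega eps T rho m xi Y0 Y1 HT Hd Hp Hpt H0 H1). lra.
  - intros y Hy.
    destruct (purification rho Hd) as [v Hv].
    set (xi := fun i j => Cmul (v i) (Cconj (v j))).
    assert (Hp : pure_state (2 * 2) xi) by (apply (pure_from_v v rho Hd Hv)).
    rewrite <- (value_eq Omega eps T rho 2 xi (Yfull (Omega + 0) T xi) (Yfull (Omega + eps) T xi)
                  HT Hd Hp Hv (Yfull_ok _ _ _) (Yfull_ok _ _ _)).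
    apply Hy. exists 2%nat, xi, (Yfull (Omega + 0) T xi), (Yfull (Omega + eps) T xi).
    split; [exact Hp|]. split; [exact Hv|]. split; [apply Yfull_ok|]. split; [apply Yfull_ok|reflexivity].
Qed.
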